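(* The one-dimensional subalgebras of ${\rm A}_5$ are exactly $\langle e_1\rangle$, $\langle e_2\rangle$ and $\langle e_1+\alpha e_2\pm e_3\rangle$ ($\alpha\in\mathbb{C}$). Up to automorphisms of ${\rm A}_5$, every one-dimensional subalgebra is equivalent to one of $\langle e_1\rangle$, $\langle e_2\rangle$, $\langle e_1+e_3\rangle$, $\langle e_1-e_3\rangle$.
   Context: ${\rm A}_5$ is the complex algebra with basis $e_1,e_2,e_3$, unit $e_1$ ($e_1e_i=e_ie_1=e_i$), $e_2e_3=e_2$, $e_3e_2=-e_2$, $e_3e_3=e_1$; all other products of basis elements are zero. A subalgebra is a linear subspace closed under multiplication (it need not contain $e_1$). Equivalence up to automorphisms means one is mapped onto the other by an algebra automorphism. $\langle S\rangle$ denotes linear span. *)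

(* Defs.v *)
From HB Require Import structures.
From mathcomp Require Import all_boot all_order all_algebra.
From mathcomp Require Import complex.
From mathcomp Require Import reals.
Set Implicit Arguments. Unset Strict Implicit. Unset Printing Implicit Defensive.
Import Order.TTheory GRing.Theory Num.Theory.
Local Open Scope ring_scope.

Section A5.
Variable R : realType.
Notation C := (R[i])%C.

Definition A5 := 'rV[C]_3.

Definition e1 : A5 := delta_mx 0 (0 : 'I_3).
Definition e2 : A5 := delta_mx 0 (1 : 'I_3).
Definition e3 : A5 := delta_mx 0 (2 : 'I_3).

(* Bilinear product determined by e1 unit, e2e3 = e2, e3e2 = -e2, e3e3 = e1,
   all other products of basis elements zero. *)
Definition mulA (x y : A5) : A5 :=
  let a := x 0 0 in let b := x 0 1 in let c := x 0 2 in
  let a' := y 0 0 in let b' := y 0 1 in let c' := y 0 2 in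
  (a * a' + c * c') *: e1
  + (a * b' + b * a' + b * c' - c * b') *: e2
  + (a * c' + c * a') *: e3.

Definition is_subalgebra (S : {vspace A5}) : Prop :=
  forall x y, x \in S -> y \in S -> mulA x y \in S.

Definition is_automorphism (f : 'End(A5)) : Prop :=
  lker f = 0%VS /\ limg f = fullv /\
  forall x y, f (mulA x y) = mulA (f x) (f y).

Definition aut_equiv (S T : {vspace A5}) : Prop :=
  exists f : 'End(A5), is_automorphism f /\ (f @: S)%VS = T.

End A5.

(* Main.v *)
Require Import Defs.
From HB Require Import structures.
From mathcomp Require Import all_boot all_order all_algebra.
From mathcomp Require Import complex.
From mathcomp Require Import reals.
From mathcomp Require Import ring.
Import Order.TTheory GRing.Theory Num.Theory.
Local Open Scope ring_scope.

Section S.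
Variable R : realType.
Notation C := (R[i])%C.
Notation A := (A5 R).

Lemma row3_eq (u w : A) : u 0 0 = w 0 0 -> u 0 1 = w 0 1 -> u 0 2 = w 0 2 -> u = w.
Proof.
move=> h0 h1 h2; apply/rowP => i.
case: i => [[|[|[|//]]] Hi].
- by rewrite (_ : Ordinal Hi = 0) //; apply/val_inj.
- by rewrite (_ : Ordinal Hi = 1) //; apply/val_inj.
- by rewrite (_ : Ordinal Hi = 2) //; apply/val_inj.
Qed.

Lemma mE0 (x y : A) : Defs.mulA x y 0 0 = x 0 0 * y 0 0 + x 0 2 * y 0 2.
Proof. by rewrite /Defs.mulA !mxE /= !mulr0 !mulr1 !addr0. Qed.
Lemma mE1 (x y : A) : Defs.mulA x y 0 1 =
  x 0 0 * y 0 1 + x 0 1 * y 0 0 + x 0 1 * y 0 2 - x 0 2 * y 0 1.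
Proof. by rewrite /Defs.mulA !mxE /= !mulr0 !mulr1 !addr0 add0r. Qed.
Lemma mE2 (x y : A) : Defs.mulA x y 0 2 = x 0 0 * y 0 2 + x 0 2 * y 0 0.
Proof. by rewrite /Defs.mulA !mxE /= !mulr0 !mulr1 !add0r. Qed.

Definition eE := (mE0, mE1, mE2, mxE).

Lemma line_scale (k : C) (w : A) : k != 0 -> <[k *: w]>%VS = <[w]>%VS.
Proof.
move=> k0; apply/eqP; rewrite eqEsubv -!memvE; apply/andP; split.
  by apply: memvZ; apply: memv_line.
by rewrite -{1}[w](scalerK k0); apply: memvZ; apply: memv_line.
Qed.

Lemma subalg_line (v : A) :
  is_subalgebra <[v]>%VS <-> Defs.mulA v v \in <[v]>%VS.
Proof.
split; first by move=> h; apply: h; rewrite memv_line.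
move=> h x y /vlineP[k ->] /vlineP[m ->].
have -> : Defs.mulA (k *: v) (m *: v) = (k * m) *: Defs.mulA v v.
  by apply: row3_eq; rewrite !eE; ring.
exact: memvZ.
Qed.


Definition Mb (b : C) : 'M[C]_3 := 1%:M + b *: delta_mx 2 1.
Definition fb (b : C) : 'End(A) := linfun (mulmxr (Mb b)).

Lemma fbE (b : C) (x : A) : fb b x = x *m Mb b.
Proof. by rewrite /fb lfunE. Qed.

Lemma l1 : lift ord0 ord0 = 1 :> 'I_3. Proof. exact: val_inj. Qed.
Lemma l2 : lift ord0 (lift ord0 ord0) = 2 :> 'I_3. Proof. exact: val_inj. Qed.

Ltac fbs := rewrite fbE !mxE !big_ord_recl big_ord0 /= !mxE /= ?l1 ?l2 /=;
  rewrite ?mulr0 ?mulr1 ?addr0 ?add0r ?mulr1 ?mulr0 ?addr0 ?add0r.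

Lemma fb0 b (x : A) : fb b x 0 0 = x 0 0.
Proof. by fbs. Qed.
Lemma fb1 b (x : A) : fb b x 0 1 = x 0 1 + b * x 0 2.
Proof. by fbs; rewrite mulrC. Qed.
Lemma fb2 b (x : A) : fb b x 0 2 = x 0 2.
Proof. by fbs. Qed.

Definition fE := (fb0, fb1, fb2, mE0, mE1, mE2, mxE).

Lemma fbK b (x : A) : fb (- b) (fb b x) = x.
Proof. by apply: row3_eq; rewrite !fE; ring. Qed.

Lemma fb_aut b : is_automorphism (fb b).
Proof.
split; [|split].
- apply/eqP/lker0P => x y h.
  by rewrite -(fbK b x) h fbK.
- apply/eqP; rewrite eqEsubv subvf /=; apply/subvP => x _.
  rewrite -(fbK (- b) x) opprK; exact: memv_img (memvf _).
- by move=> x y; apply: row3_eq; rewrite !fE; ring.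
Qed.

Lemma aut_line b (w t : A) : fb b w = t -> aut_equiv <[w]>%VS <[t]>%VS.
Proof. by move=> h; exists (fb b); split; [exact: fb_aut | rewrite limg_line h]. Qed.

End S.

Theorem mainTheorem12 (R : realType) (S : {vspace A5 R}) :
  \dim S = 1%N ->
  (is_subalgebra S <->
     [\/ S = <[e1 R]>%VS, S = <[e2 R]>%VS,
         exists alpha : R[i], S = <[e1 R + alpha *: e2 R + e3 R]>%VS
       | exists alpha : R[i], S = <[e1 R + alpha *: e2 R - e3 R]>%VS])
  /\
  (is_subalgebra S ->
     [\/ aut_equiv S <[e1 R]>%VS, aut_equiv S <[e2 R]>%VS,
         aut_equiv S <[e1 R + e3 R]>%VS | aut_equiv S <[e1 R - e3 R]>%VS]).
Proof.
move=> dimS.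
have [v [vnz defS]] : exists v : A5 R, v != 0 /\ S = <[v]>%VS.
  have vnz : vpick S != 0.
    by rewrite vpick0; apply/eqP => S0; move: dimS; rewrite S0 dimv0.
  exists (vpick S); split => //.
  apply/eqP; rewrite eq_sym eqEdim -memvE memv_pick dim_vline vnz dimS //.
have eE := (@mE0 R, @mE1 R, @mE2 R, @mxE).
have part1 : is_subalgebra S ->
     [\/ S = <[e1 R]>%VS, S = <[e2 R]>%VS,
         exists alpha : R[i], S = <[e1 R + alpha *: e2 R + e3 R]>%VS
       | exists alpha : R[i], S = <[e1 R + alpha *: e2 R - e3 R]>%VS].
  rewrite defS subalg_line => /vlineP [l hl].
  have h0 : Defs.mulA v v 0 0 = (l *: v) 0 0 by rewrite hl.
  have h1 : Defs.mulA v v 0 1 = (l *: v) 0 1 by rewrite hl.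
  have h2 : Defs.mulA v v 0 2 = (l *: v) 0 2 by rewrite hl.
  move: h0 h1 h2; rewrite /= !eE /=.
  set a := v 0 0; set b := v 0 1; set c := v 0 2 => h0 h1 h2.
  have [a0|anz] := eqVneq a 0.
    have c0 : c = 0.
      move: h0; rewrite a0 !mul0r !mulr0 add0r => /eqP.
      by rewrite mulf_eq0 orbb => /eqP.
    have vE : v = b *: e2 R by apply: row3_eq; rewrite !mxE /= -/a -/b -/c ?a0 ?b0 ?c0 ?ca /=; (ring || (field; exact: anz)).
    have bnz : b != 0 by apply: contraNneq vnz => b0; rewrite vE b0 scale0r.
    by apply: Or42; rewrite vE line_scale.
  have [c0|cnz] := eqVneq c 0.
    have la : l = a.
      by apply: (mulIf anz); move: h0; rewrite c0 mulr0 addr0.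
    have b0 : b = 0.
      have e : a * b + b * a = a * b by move: h1; rewrite la c0 !mulr0 !mul0r subr0 addr0.
      have : a * b = 0.
        have -> : a * b = (a*b + b*a) - b * a by ring.
        by rewrite e; ring.
      by move/eqP; rewrite mulf_eq0 (negbTE anz) => /eqP.
    have vE : v = a *: e1 R by apply: row3_eq; rewrite !mxE /= -/a -/b -/c ?a0 ?b0 ?c0 ?ca /=; (ring || (field; exact: anz)).
    by apply: Or41; rewrite vE line_scale.
  have l2a : l = a + a.
    by apply: (mulIf cnz); rewrite -h2; ring.
  have : (c - a) * (c + a) = 0.
    have -> : (c - a) * (c + a) = (a * a + c * c) - (a + a) * a by ring.
    by rewrite h0 l2a subrr.
  move/eqP; rewrite mulf_eq0 => /orP [/eqP hc | /eqP hc].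
    have ca : c = a by apply/eqP; rewrite -subr_eq0 hc.
    apply: Or43; exists (b / a).
    have vE : v = a *: (e1 R + (b / a) *: e2 R + e3 R).
      by apply: row3_eq; rewrite !mxE /= -/a -/b -/c ?a0 ?b0 ?c0 ?ca /=; (ring || (field; exact: anz)).
    by rewrite vE line_scale.
  have ca : c = - a by apply/eqP; rewrite -addr_eq0 hc.
  apply: Or44; exists (b / a).
  have vE : v = a *: (e1 R + (b / a) *: e2 R - e3 R).
    by apply: row3_eq; rewrite !mxE /= -/a -/b -/c ?a0 ?b0 ?c0 ?ca /=; (ring || (field; exact: anz)).
  by rewrite vE line_scale.
split.
  split=> // -[->|->|[al ->]|[al ->]]; apply/subalg_line/vlineP.
  - by exists 1; apply: row3_eq; rewrite !eE /=; ring.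
  - by exists 0; apply: row3_eq; rewrite !eE /=; ring.
  - by exists 2; apply: row3_eq; rewrite !eE /=; ring.
  - by exists 2; apply: row3_eq; rewrite !eE /=; ring.
move/part1 => -[->|->|[al ->]|[al ->]].
- by apply: Or41; apply: (@aut_line R 0); apply: row3_eq; rewrite !fE /=; ring.
- by apply: Or42; apply: (@aut_line R 0); apply: row3_eq; rewrite !fE /=; ring.
- by apply: Or43; apply: (@aut_line R (- al)); apply: row3_eq; rewrite !fE /=; ring.
- by apply: Or44; apply: (@aut_line R al); apply: row3_eq; rewrite !fE /=; ring.
Qed.
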